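(* Let $(X,d)$ be a geodesic metric space and $\epsilon\ge 0$ such that for all $x,y\in X$, $s,t\ge 0$, the set $B(x,s)\cap B(y,t)$ has eccentricity at most $\epsilon$. Then for every $q\ge 0$, all $x,y\in X$, every $q$-path $\mu$ from $x$ to $y$ and every geodesic $\gamma$ from $x$ to $y$, each point of $\mu$ lies within distance $2q+2\epsilon$ of some point of $\gamma$.
   Context: $B(x,r)=\{z\in X: d(x,z)\le r\}$ denotes the closed ball. A set $S\subseteq X$ has eccentricity at most $\delta$ if $S=\emptyset$ or there exist $R\ge 0$ and $c,c'\in X$ with $B(c,R)\subseteq S\subseteq B(c',R+\delta)$. For $q\ge0$, a $q$-path from $x$ to $y$ is a continuous path $\mu$ from $x$ to $y$ such that every point $z$ on $\mu$ satisfies $d(x,z)+d(z,y)\le d(x,y)+q$. *)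

(* Defs.v *)
From Stdlib Require Import Reals.
Open Scope R_scope.

Definition is_metric {X : Type} (d : X -> X -> R) : Prop :=
  (forall x y, 0 <= d x y) /\
  (forall x y, d x y = 0 <-> x = y) /\
  (forall x y, d x y = d y x) /\
  (forall x y z, d x z <= d x y + d y z).

Definition cball {X : Type} (d : X -> X -> R) (x : X) (r : R) : X -> Prop :=
  fun z => d x z <= r.

Definition ecc_le {X : Type} (d : X -> X -> R) (S : X -> Prop) (delta : R) : Prop :=
  (forall z, ~ S z) \/
  exists (Rad : R) (c c' : X), 0 <= Rad /\
    (forall z, cball d c Rad z -> S z) /\
    (forall z, S z -> cball d c' (Rad + delta) z).

Definition cont_on {X : Type} (d : X -> X -> R) (f : R -> X) (a b : R) : Prop :=
  forall t, a <= t <= b -> forall e, 0 < e -> exists del, 0 < del /\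
    forall s, a <= s <= b -> Rabs (s - t) < del -> d (f s) (f t) < e.

Definition is_geodesic {X : Type} (d : X -> X -> R) (x y : X) (g : R -> X) : Prop :=
  g 0 = x /\ g (d x y) = y /\
  forall s t, 0 <= s <= d x y -> 0 <= t <= d x y -> d (g s) (g t) = Rabs (s - t).

Definition geodesic_space {X : Type} (d : X -> X -> R) : Prop :=
  forall x y : X, exists g, is_geodesic d x y g.

Definition is_qpath {X : Type} (d : X -> X -> R) (q : R) (x y : X) (mu : R -> X) : Prop :=
  mu 0 = x /\ mu 1 = y /\ cont_on d mu 0 1 /\
  forall t, 0 <= t <= 1 -> d x (mu t) + d (mu t) y <= d x y + q.

(* Main.v *)
Require Import Defs.
From Stdlib Require Import Reals Lra.
Open Scope R_scope.

Theorem lemma3p3 (X : Type) (d : X -> X -> R) (eps : R)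
  (Hmet : is_metric d) (Hgeo : geodesic_space d) (Heps : 0 <= eps)
  (Hecc : forall (x y : X) (s t : R), 0 <= s -> 0 <= t ->
     ecc_le d (fun z => cball d x s z /\ cball d y t z) eps) :
  forall (q : R), 0 <= q -> forall (x y : X) (mu gam : R -> X),
    is_qpath d q x y mu -> is_geodesic d x y gam ->
    forall t, 0 <= t <= 1 ->
      exists s, 0 <= s <= d x y /\ d (mu t) (gam s) <= 2 * q + 2 * eps.
Proof.
  destruct Hmet as [Hpos [Hzero [Hsym Htri]]].
  intros q Hq x y mu gam [H0 [H1 [_ Hqp]]] [G0 [G1 Giso]] t Ht.
  set (z := mu t). specialize (Hqp t Ht). fold z in Hqp.
  set (D := d x y) in *.
  assert (HD : 0 <= D) by apply Hpos.
  set (a := d x z) in *.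
  assert (Ha : 0 <= a) by apply Hpos.
  destruct (Rle_lt_dec a q) as [Haq | Haq].
  { exists 0. split. lra. rewrite G0, Hsym. fold a. lra. }
  destruct (Rle_lt_dec D a) as [HaD | HaD].
  { exists D. split. lra. rewrite G1. pose proof (Hpos z y). lra. }
  assert (Hgx : d x (gam a) = a).
  { rewrite <- G0 at 1. rewrite Giso by lra. rewrite Rabs_left1; lra. }
  assert (Hgy : d (gam a) y = D - a).
  { replace y with (gam D) by exact G1. rewrite Giso by lra. rewrite Rabs_left1; lra. }
  assert (Hb0 : 0 <= D + q - a) by lra.
  destruct (Hecc x y a (D + q - a) Ha Hb0) as [Hemp | [Rad [c [c' [HR [Hin Hout]]]]]].
  { exfalso. apply (Hemp z). unfold cball. fold a. rewrite (Hsym y z). split; lra. }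
  assert (HRq : Rad <= q).
  { destruct (Rle_lt_dec Rad (d x c)) as [Hc | Hc].
    - destruct (Hgeo c x) as [g [g0 [g1 giso]]].
      assert (Hcx : d c x = d x c) by apply Hsym.
      assert (Hw : cball d c Rad (g Rad)).
      { unfold cball. rewrite <- g0 at 1. rewrite giso by lra. rewrite Rabs_left1; lra. }
      destruct (Hin _ Hw) as [_ Hwy]. unfold cball in Hwy.
      assert (Hxw : d x (g Rad) = d x c - Rad).
      { rewrite <- g1 at 1. rewrite giso by lra. rewrite Rabs_right; lra. }
      assert (Hc2 : cball d c Rad c). { unfold cball. rewrite (proj2 (Hzero c c) eq_refl). lra. }
      destruct (Hin _ Hc2) as [Hcx2 _]. unfold cball in Hcx2.
      pose proof (Htri x (g Rad) y) as HT. change (d x y) with D in HT. rewrite (Hsym (g Rad) y) in HT. lra.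
    - assert (Hx : cball d c Rad x). { unfold cball. rewrite Hsym. lra. }
      destruct (Hin _ Hx) as [_ Hxy]. unfold cball in Hxy. rewrite Hsym in Hxy. fold D in Hxy. lra. }
  exists a. split. lra.
  assert (Hz : cball d c' (Rad + eps) z).
  { apply Hout. unfold cball. fold a. rewrite (Hsym y z). split; lra. }
  assert (Hg : cball d c' (Rad + eps) (gam a)).
  { apply Hout. unfold cball. rewrite (Hsym y (gam a)), Hgy. split; lra. }
  unfold cball in *. pose proof (Htri z c' (gam a)). rewrite (Hsym z c') in *. lra.
Qed.
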